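(* Let $P,N>0$ and $L\in\mathbb{Z}_{\ge2}$. For each $n$ let $\mathcal{D}=\mathcal{D}_n$ be a probability distribution supported on $\mathcal{B}^n(\sqrt{nP})$, and let $x_1,\dots,x_L$ be i.i.d. with law $\mathcal{D}$. Suppose $E(P,N,L)$ and $\overline{E}(P,N,L)$ are real numbers with $$E(P,N,L)\le\lim_{n\to\infty}-\frac1n\ln\Pr\left[\mathrm{rad}^2(x_1,\dots,x_L)\le nN\right],\qquad \overline{E}(P,N,L)\le\lim_{n\to\infty}-\frac1n\ln\Pr\left[\overline{\mathrm{rad}}^2(x_1,\dots,x_L)\le nN\right].$$ Then $$C_{L-1}(P,N)\ge\frac{E(P,N,L)}{L-1},\qquad \overline{C}_{L-1}(P,N)\ge\frac{\overline{E}(P,N,L)}{L-1}.$$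
   Context: $\mathcal{B}^n(y,r)$ is the closed Euclidean ball of radius $r$ centered at $y$; $\mathcal{B}^n(r)=\mathcal{B}^n(0,r)$. For $x_1,\dots,x_L\in\mathbb{R}^n$: the squared Chebyshev radius is $\mathrm{rad}^2(x_1,\dots,x_L)=\min_{y\in\mathbb{R}^n}\max_i\|x_i-y\|_2^2$; the average squared radius is $\overline{\mathrm{rad}}^2(x_1,\dots,x_L)=\frac1L\sum_i\|x_i-\bar x\|_2^2$ with $\bar x=\frac1L\sum_ix_i$. A finite $\mathcal{C}\subseteq\mathcal{B}^n(\sqrt{nP})$ is $(P,N,L-1)$-list-decodable if $|\mathcal{C}\cap\mathcal{B}^n(y,\sqrt{nN})|\le L-1$ for all $y\in\mathbb{R}^n$ (equivalently every $L$ distinct points have $\mathrm{rad}^2>nN$), and $(P,N,L-1)$-average-radius list-decodable if every $L$ distinct points have $\overline{\mathrm{rad}}^2>nN$. Rate $R(\mathcal{C})=\frac1n\ln|\mathcal{C}|$. $C_{L-1}(P,N)$ (resp. $\overline{C}_{L-1}(P,N)$) is $\limsup_{n\to\infty}$ of the supremum of $R(\mathcal{C})$ over $(P,N,L-1)$-list-decodable (resp. average-radius list-decodable) codes $\mathcal{C}\subseteq\mathcal{B}^n(\sqrt{nP})$. *)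

(* Defs.v *)
(* R : realType, points of R^n as n.-tuple R
   (which carries the product sigma-algebra in mathcomp-analysis). *)
From HB Require Import structures.
From mathcomp Require Import all_boot all_order all_algebra.
From mathcomp Require Import all_classical all_reals all_analysis.
Set Implicit Arguments. Unset Strict Implicit. Unset Printing Implicit Defensive.
Import Order.TTheory GRing.Theory Num.Theory.
Local Open Scope classical_set_scope.
Local Open Scope ring_scope.

Section Defs.
Variable R : realType.

Definition sqdist (n : nat) (x y : n.-tuple R) : R :=
  \sum_(j < n) (tnth x j - tnth y j) ^+ 2.

Definition eball (n : nat) (y : n.-tuple R) (r : R) : set (n.-tuple R) :=
  [set x | sqdist x y <= r ^+ 2].

Definition origin (n : nat) : n.-tuple R := [tuple of nseq n 0].

Definition rad2 (n L : nat) (x : 'I_L -> n.-tuple R) : R :=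
  inf [set \big[Num.max/0]_(i < L) sqdist (x i) y | y in [set: n.-tuple R]].

Definition centroid (n L : nat) (x : 'I_L -> n.-tuple R) : n.-tuple R :=
  [tuple (L%:R^-1 * \sum_(i < L) tnth (x i) j) | j < n].

Definition avgrad2 (n L : nat) (x : 'I_L -> n.-tuple R) : R :=
  L%:R^-1 * \sum_(i < L) sqdist (x i) (centroid x).

(* finite codes are represented by duplicate-free sequences *)
Definition in_power_ball (n : nat) (P : R) (C : seq (n.-tuple R)) : Prop :=
  uniq C /\ forall x, x \in C -> eball (origin n) (Num.sqrt (n%:R * P)) x.

Definition list_decodable (n : nat) (P N : R) (L : nat) (C : seq (n.-tuple R)) : Prop :=
  in_power_ball P C /\
  forall y : n.-tuple R,
    (count (fun x => x \in eball y (Num.sqrt (n%:R * N))) C <= L - 1)%N.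

Definition avg_list_decodable (n : nat) (P N : R) (L : nat) (C : seq (n.-tuple R)) : Prop :=
  in_power_ball P C /\
  forall x : 'I_L -> n.-tuple R, injective x -> (forall i, x i \in C) ->
    n%:R * N < avgrad2 x.

Definition rate (n : nat) (C : seq (n.-tuple R)) : \bar R :=
  if size C == 0%N then -oo%E else ((n%:R)^-1 * ln (size C)%:R)%:E.

Definition Cap (P N : R) (L : nat) : \bar R :=
  limn_esup (fun n => ereal_sup [set rate C | C in [set C | @list_decodable n P N L C]]).

Definition Cap_avg (P N : R) (L : nat) : \bar R :=
  limn_esup (fun n => ereal_sup [set rate C | C in [set C | @avg_list_decodable n P N L C]]).

Definition expo (n : nat) (p : \bar R) : \bar R :=
  if fine p == 0 then +oo%E else (- ((n%:R)^-1 * ln (fine p)))%:E.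

Definition iid_with_law (d : measure_display) (Omega : measurableType d) (n L : nat)
  (Pr : probability Omega R) (D : probability (n.-tuple R) R)
  (X : 'I_L -> Omega -> n.-tuple R) : Prop :=
  (forall i, measurable_fun [set: Omega] (X i)) /\
  (forall i (A : set (n.-tuple R)), measurable A -> Pr (X i @^-1` A) = D A) /\
  (forall A : 'I_L -> set (n.-tuple R), (forall i, measurable (A i)) ->
     Pr (\bigcap_(i in [set: 'I_L]) (X i @^-1` A i)) = (\prod_(i < L) Pr (X i @^-1` A i))%E).

End Defs.

(* Main.v *)
Require Import Defs.
From HB Require Import structures.
From mathcomp Require Import all_boot all_order all_algebra.
From mathcomp Require Import all_classical all_reals all_analysis.
Import Order.TTheory GRing.Theory Num.Theory.
Local Open Scope classical_set_scope.
Local Open Scope ring_scope.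
From mathcomp Require Import ring lra.
Set Implicit Arguments. Unset Strict Implicit.

Section prodP.
Context d1 d2 (T1 : measurableType d1) (T2 : measurableType d2) (R : realType).
Variables (p1 : probability T1 R) (p2 : probability T2 R).
Definition prodm := (p1 \x p2)%E.
HB.instance Definition _ := Measure.on prodm.
Let prodm_setT : prodm setT = 1%E.
Proof. rewrite -setXTT /prodm product_measure1E//; have h1 := probability_setT p1; have h2 := probability_setT p2; rewrite /= in h1 h2. apply: (eq_trans _ (mule1 1%E)); congr (_ * _)%E; [exact: h1|exact: h2]. Qed.
HB.instance Definition _ := Measure_isProbability.Build _ _ _ prodm prodm_setT.
Definition prodP : probability (T1 * T2)%type R := prodm.
Lemma prodPE A B : measurable A -> measurable B -> prodP (A `*` B) = (p1 A * p2 B)%E.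
Proof. by move=> mA mB; exact: (product_measure1E p1 p2 mA mB). Qed.
End prodP.

Section pushP.
Context d1 d2 (T1 : measurableType d1) (T2 : measurableType d2) (R : realType).
Variables (p : probability T1 R) (f : T1 -> T2) (mf : measurable_fun setT f).
Definition pushm := pushforward p f.
Let pushm0 : pushm set0 = 0%E.
Proof. by rewrite /pushm /pushforward preimage_set0 measure0. Qed.
Let pushm_ge0 A : (0 <= pushm A)%E.
Proof. exact: measure_ge0. Qed.
Let pushm_sigma_additive : semi_sigma_additive pushm.
Proof.
move=> F mF tF mUF; rewrite /pushm /pushforward preimage_bigcup.
apply: measure_semi_sigma_additive.
- by move=> n; rewrite -[X in measurable X]setTI; exact: mf.
- apply/trivIsetP => /= i j _ _ ij; rewrite -preimage_setI.
  by move/trivIsetP : tF => /(_ _ _ _ _ ij) ->//; rewrite preimage_set0.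
- by rewrite -preimage_bigcup -[X in measurable X]setTI; exact: mf.
Qed.
HB.instance Definition _ := isMeasure.Build _ _ _ pushm
  pushm0 pushm_ge0 pushm_sigma_additive.
Let pushm_setT : pushm setT = 1%E.
Proof. by rewrite /pushm /pushforward preimage_setT probability_setT. Qed.
HB.instance Definition _ := Measure_isProbability.Build _ _ _ pushm pushm_setT.
Definition pushP : probability T2 R := pushm.
Lemma pushPE A : pushP A = p (f @^-1` A).
Proof. by []. Qed.
End pushP.

Section diracP.
Context d (T : measurableType d) (R : realType) (a : T).
Definition diracm := @dirac _ T a R.
HB.instance Definition _ := Measure.on diracm.
Let diracm_setT : diracm setT = 1%E.
Proof. by rewrite /diracm diracT. Qed.
HB.instance Definition _ := Measure_isProbability.Build _ _ _ diracm diracm_setT.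
Definition diracP : probability T R := diracm.
End diracP.

Section tpow.
Context d (T : measurableType d) (R : realType) (D : probability T R).

Lemma mcons M : measurable_fun [set: (T * M.-tuple T)%type]
  (fun x => [the M.+1.-tuple T of x.1 :: x.2]).
Proof. exact: measurable_cons. Qed.

Fixpoint tpow (M : nat) : probability (M.-tuple T) R :=
  match M with
  | 0 => diracP R [tuple]
  | M'.+1 => pushP (prodP D (tpow M')) (@mcons M')
  end.

End tpow.

Section rect.
Context d (T : measurableType d).
Definition rect K (A : 'I_K -> set T) : set (K.-tuple T) :=
  [set y | forall i, A i (tnth y i)].

Lemma rect_measurable K (A : 'I_K -> set T) :
  (forall i, measurable (A i)) -> measurable (rect A).
Proof.
move=> mA.
rewrite (_ : rect A = \bigcap_(i in [set: 'I_K]) ((fun y : K.-tuple T => tnth y i) @^-1` A i)).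
  apply: fin_bigcap_measurable; first exact: finite_finset.
  move=> i _; rewrite -[X in measurable X]setTI; exact: (@measurable_tnth _ T K i measurableT _ (mA i)).
by apply/seteqP; split => [y Ay i _|y Ay i]; [exact: Ay| exact: Ay].
Qed.
End rect.

Section tpow_rect.
Context d (T : measurableType d) (R : realType) (D : probability T R).

Lemma tpow_rect M (A : 'I_M -> set T) : (forall i, measurable (A i)) ->
  tpow D M (rect A) = (\prod_(i < M) D (A i))%E.
Proof.
elim: M A => [|M IH] A mA.
  rewrite big_ord0 /= (_ : rect A = setT); first exact: probability_setT.
  by apply/seteqP; split => // y _ [].
rewrite big_ord_recl /= pushPE.
rewrite (_ : _ @^-1` _ = A ord0 `*` rect (fun i => A (lift ord0 i))).
  rewrite prodPE //; first by rewrite IH.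
  exact: rect_measurable.
apply/seteqP; split => [[x t] /= H|[x t] [/= H1 H2] i].
  split; first by have := H ord0; rewrite (tnth_nth x) /=.
  move=> i; have := H (lift ord0 i).
  by rewrite (tnth_nth x) /= (tnth_nth x).
case: (unliftP ord0 i) => [j ->|->]; last by rewrite (tnth_nth x).
by have := H2 j; rewrite (tnth_nth x) /= (tnth_nth x).
exact: measurable_id.
Qed.
End tpow_rect.

Section tuple_unique.
Context d (T : measurableType d) (R : realType) (K : nat).

Definition rects : set (set (K.-tuple T)) :=
  [set S | exists A : 'I_K -> set T, (forall i, measurable (A i)) /\ S = rect A].

Lemma measurable_rects : (@measurable _ (K.-tuple T)) = <<s rects >>.
Proof.
apply/seteqP; split; last first.
  apply: smallest_sub; first exact: sigma_algebra_measurable.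
  by move=> _ [A [mA ->]]; exact: rect_measurable.
move=> S mS.
have : <<s setT, \big[setU/set0]_(i < K) preimage_set_system setT
   (fun y : K.-tuple T => tnth y i) measurable >> S := mS.
apply: sub_sigma_algebra2.
elim/big_ind: _ => //; first by move=> X Y HX HY Z [/HX|/HY].
move=> i _ _ [B mB <-].
exists (fun j => if j == i then B else setT); split.
  by move=> j; case: ifP.
apply/seteqP; split => [y [_ /= By] j|y /= Hy]; first by case: eqP => // ->.
by split => //; have := Hy i; rewrite eqxx.
Qed.

Lemma tuple_unique (m1 m2 : probability (K.-tuple T) R) :
  (forall A : 'I_K -> set T, (forall i, measurable (A i)) -> m1 (rect A) = m2 (rect A)) ->
  forall S, measurable S -> m1 S = m2 S.
Proof.
move=> h S mS.
apply: (measure_unique rects (fun _ => setT)) => //.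
- exact: measurable_rects.
- move=> _ _ [A [mA ->]] [B [mB ->]].
  exists (fun i => A i `&` B i); split; first by move=> i; exact: measurableI.
  by apply/seteqP; split => [y [Ay By] i|y H]; [split|split=> i; have [] := H i].
- move=> _; exists (fun _ => setT); split => //.
  by apply/seteqP; split.
- by rewrite bigcup_const.
- by move=> _ [A [mA ->]]; exact: h.
- by move=> _; apply: (@le_lt_trans _ _ 1%E); [exact: probability_le1|exact: ltry].
Qed.
End tuple_unique.

Section laws.
Context d (T : measurableType d) (R : realType) (D : probability T R).

Definition sel M L (s : 'I_L -> 'I_M) (y : M.-tuple T) : L.-tuple T :=
  [tuple tnth y (s i) | i < L].

Lemma measurable_sel M L (s : 'I_L -> 'I_M) : measurable_fun setT (sel s).
Proof.
apply/measurable_fun_tnthP => i.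
rewrite (_ : _ \o _ = fun y : M.-tuple T => tnth y (s i)).
  exact: measurable_tnth.
by apply/funext => y /=; rewrite tnth_mktuple.
Qed.

Lemma sel_law M L (s : 'I_L -> 'I_M) : injective s ->
  forall S, measurable S -> tpow D M (sel s @^-1` S) = tpow D L S.
Proof.
move=> inj S mS.
have := @tuple_unique _ T R L (pushP (tpow D M) (measurable_sel s)) (tpow D L).
move=> /(_ _ S mS); rewrite pushPE; apply => A mA.
rewrite pushPE tpow_rect //.
pose B j := if [pick i | s i == j] is Some i then A i else setT.
have mB j : measurable (B j) by rewrite /B; case: pickP.
rewrite (_ : _ @^-1` _ = rect B); last first.
  apply/seteqP; split => [y /= H j|y /= H i].
    rewrite /B; case: pickP => // i /eqP <-.
    by have := H i; rewrite tnth_mktuple.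
  rewrite tnth_mktuple; have := H (s i); rewrite /B; case: pickP.
    by move=> i' /eqP /inj ->.
  by move=> /(_ i); rewrite eqxx.
rewrite tpow_rect //.
rewrite (partition_big s xpredT) //=.
apply: eq_bigr => j _; rewrite /B; case: pickP => [i /eqP sij|none].
  rewrite (big_pred1 i) // => k /=; apply/eqP/eqP => [skj|->//].
  by apply: inj; rewrite skj sij.
rewrite big_pred0; first by exact: probability_setT.
by move=> i; have := none i.
Qed.

Lemma iid_law (d' : measure_display) (Omega : measurableType d')
    (Pr : probability Omega R) L (X : 'I_L -> Omega -> T) :
  (forall i, measurable_fun [set: Omega] (X i)) ->
  (forall i (A : set T), measurable A -> Pr (X i @^-1` A) = D A) ->
  (forall A : 'I_L -> set T, (forall i, measurable (A i)) ->
     Pr (\bigcap_(i in [set: 'I_L]) (X i @^-1` A i)) = (\prod_(i < L) Pr (X i @^-1` A i))%E) ->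
  forall S, measurable S ->
    Pr ((fun w => [tuple X i w | i < L]) @^-1` S) = tpow D L S.
Proof.
move=> mX hD hI.
have mXt : measurable_fun setT (fun w => [tuple X i w | i < L]).
  apply/measurable_fun_tnthP => i.
  rewrite (_ : _ \o _ = X i) //.
  by apply/funext => w /=; rewrite tnth_mktuple.
move=> S mS.
have := @tuple_unique _ T R L (pushP Pr mXt) (tpow D L).
move=> /(_ _ S mS); rewrite pushPE; apply => A mA.
rewrite pushPE tpow_rect //.
rewrite (_ : _ @^-1` _ = \bigcap_(i in [set: 'I_L]) (X i @^-1` A i)); last first.
  apply/seteqP; split => [w /= H i _|w /= H i].
    by have := H i; rewrite tnth_mktuple.
  by rewrite tnth_mktuple; exact: H.
rewrite hI //; apply: eq_bigr => i _; exact: hD.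
Qed.
End laws.

Section exists_good.
Context d (T : measurableType d) (R : realType) (D : probability T R).
Variables (M L : nat) (Bad : set (L.-tuple T)) (mBad : measurable Bad).
Variables (Good : set T) (mGood : measurable Good) (hGood : D Good = 1%E).

Definition injs : seq {ffun 'I_L -> 'I_M} := seq.filter (fun s : {ffun 'I_L -> 'I_M} => injectiveb (fun i : 'I_L => s i)) (enum {ffun 'I_L -> 'I_M}).
Definition cnt (y : M.-tuple T) : nat := \sum_(s <- injs) (sel s y \in Bad).

Lemma exists_good (p : R) : tpow D L Bad = p%:E ->
  exists y : M.-tuple T, (forall i, Good (tnth y i)) /\
    (cnt y)%:R <= (size injs)%:R * p.
Proof.
move=> hp.
have p0 : 0 <= p by rewrite -lee_fin -hp measure_ge0.
set c := (size injs)%:R * p.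
have c0 : 0 <= c by rewrite mulr_ge0.
apply: contrapT => H.
have hK : forall y : M.-tuple T, rect (fun _ => Good) y -> ((Num.Def.trunc c).+1 <= cnt y)%N.
  move=> y Gy; rewrite ltnNge; apply/negP => hc; apply: H; exists y; split => //.
  by rewrite -truncn_ge_nat.
have Kc : c < (Num.Def.trunc c).+1%:R by rewrite -truncn_lt_nat.
set Gd := rect (fun _ : 'I_M => Good).
have mGd : measurable Gd by exact: rect_measurable.
have hGd : tpow D M Gd = 1%E.
  rewrite tpow_rect // big1 // => i _; exact: hGood.
have eqI : (\int[tpow D M]_(y in Gd) ((cnt y)%:R)%:E =
    \sum_(s <- injs) \int[tpow D M]_(y in Gd) (\1_(sel s @^-1` Bad) y)%:E)%E.
  rewrite -ge0_integral_sum //; first last.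
    move=> s; apply/measurable_realfun.measurable_EFinP; apply: measurable_realfun.measurable_indic.
    rewrite -[X in measurable X]setTI; exact: measurable_sel.
  apply: eq_integral => y _; rewrite sumEFin; congr EFin.
  rewrite /cnt natr_sum; apply: eq_bigr => s _; rewrite indicE.
  by [].
have le1 : (((Num.Def.trunc c).+1)%:R%:E <= \int[tpow D M]_(y in Gd) ((cnt y)%:R)%:E)%E.
  rewrite -[X in (X <= _)%E]mule1 -hGd -integral_cst //.
  apply: ge0_le_integral => //.
  - by move=> y _; rewrite lee_fin.
  - apply/measurable_realfun.measurable_EFinP.
    rewrite (_ : (fun y => _) = (fun y => \sum_(s <- injs) (\1_(sel s @^-1` Bad) y : R))).
      apply: measurable_sum => s; apply: measurable_realfun.measurable_indic.
      rewrite -[X in measurable X]setTI; exact: measurable_sel.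
    apply/funext => y; rewrite /cnt natr_sum.
    by apply: eq_bigr => s _; rewrite indicE.
  - by move=> y Gy; rewrite lee_fin ler_nat; exact: hK.
have le2 : (\int[tpow D M]_(y in Gd) ((cnt y)%:R)%:E <= c%:E)%E.
  rewrite eqI /c.
  have -> : (size injs)%:R * p = \sum_(s <- injs) p.
    by elim: injs => [|a l IH]; rewrite ?big_nil ?big_cons /= ?mul0r // -IH -add1n natrD mulrDl mul1r.
  rewrite -sumEFin big_seq [X in (_ <= X)%E]big_seq; apply: lee_sum => s sin.
  have inj : injective s.
    by move: sin; rewrite mem_filter => /andP[/injectiveP].
  rewrite integral_indic //; last first.
    rewrite -[X in measurable X]setTI; exact: measurable_sel.
  rewrite -hp -(sel_law D inj mBad).
  have mS : measurable (sel s @^-1` Bad).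
    by rewrite -[X in measurable X]setTI; exact: measurable_sel.
  apply: le_measure; rewrite ?inE //; exact: measurableI.
have := le_trans le1 le2; rewrite lee_fin => /(lt_le_trans Kc).
by rewrite ltxx.
Qed.
End exists_good.

Lemma size_le_undup (V : eqType) (s : seq V) (b : nat) :
  (forall v, count_mem v s <= b)%N -> (size s <= b * size (undup s))%N.
Proof.
move=> hb.
have -> : size s = \sum_(v <- undup s) count_mem v s.
  rewrite -sum1_size -(big_undup_iterop_count addn s xpredT (fun _ => 1%N)).
  apply: eq_bigr => v _.
  by rewrite Monoid.iteropE iter_addn mul1n addn0.
rewrite mulnC -sum1_size big_distrl /=.
by apply: leq_sum => v _; rewrite mul1n.
Qed.

Section expurgate.
Context d (T : measurableType d) (M L : nat) (L0 : (0 < L)%N).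
Variables (Bad : set (L.-tuple T)) (y : M.-tuple T).
Hypothesis bad_const : forall v : T, Bad [tuple v | _ < L].
Let o : 'I_L := Ordinal L0.

Definition badS := seq.filter (fun s : {ffun 'I_L -> 'I_M} => sel s y \in Bad) (injs M L).
Definition Rm := map (fun s : {ffun 'I_L -> 'I_M} => s o) badS.
Definition Ix := [seq i <- enum 'I_M | i \notin Rm].
Definition xcode := undup [seq tnth y i | i <- Ix].

Lemma size_badS : size badS = cnt Bad y.
Proof.
by rewrite size_filter /cnt -sum1_count big_mkcond /=; apply: eq_bigr => s _; case: ifP.
Qed.

Lemma size_Ix : (M <= size Ix + cnt Bad y)%N.
Proof.
rewrite -size_badS.
have h := count_predC (mem Rm) (enum 'I_M).
rewrite size_enum_ord in h.
rewrite /Ix size_filter -{1}h addnC; apply: leq_add; first exact: leqnn.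
have -> : count (mem Rm) (enum 'I_M) = size [seq i <- enum 'I_M | i \in Rm].
  by rewrite size_filter.
rewrite -(size_map (fun s : {ffun 'I_L -> 'I_M} => s o) badS).
apply: uniq_leq_size; first by rewrite filter_uniq // enum_uniq.
by move=> i; rewrite mem_filter => /andP[].
Qed.

Lemma code_uniq : uniq xcode.
Proof. exact: undup_uniq. Qed.

Lemma code_mem v : v \in xcode -> exists2 i, i \in Ix & v = tnth y i.
Proof. by rewrite mem_undup => /mapP. Qed.

Lemma in_injs (s : {ffun 'I_L -> 'I_M}) : injective s -> s \in injs M L.
Proof. by move=> inj; rewrite mem_filter mem_enum andbT; apply/injectiveP. Qed.

Lemma code_good (x : 'I_L -> T) : injective x -> (forall k, x k \in xcode) ->
  ~ Bad [tuple x k | k < L].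
Proof.
move=> injx xC hB.
have hk : forall k, exists i, i \in Ix /\ x k = tnth y i.
  by move=> k; have [i ? ?] := code_mem (xC k); exists i.
have [j hj] := choice hk.
pose s : {ffun 'I_L -> 'I_M} := [ffun k => j k].
have injS : injective s.
  by move=> a b; rewrite !ffunE => e; apply: injx; rewrite (hj a).2 (hj b).2 e.
have sB : sel s y = [tuple x k | k < L].
  by apply: eq_from_tnth => k; rewrite !tnth_mktuple ffunE (hj k).2.
have sbad : s \in badS by rewrite mem_filter in_injs // andbT sB; exact: mem_set.
have : s o \in Rm by exact: (map_f (fun s : {ffun 'I_L -> 'I_M} => s o)).
have := (hj o).1; rewrite mem_filter ffunE => /andP[/negP].
by [].
Qed.

Lemma code_size : (size Ix <= L.-1 * size xcode)%N.
Proof.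
have -> : size Ix = size [seq tnth y i | i <- Ix] by rewrite size_map.
apply: size_le_undup => v; rewrite leqNgt; apply/negP => hv.
set J := [seq i <- Ix | tnth y i == v].
have szJ : (L <= size J)%N.
  by rewrite size_filter -(count_map _ (pred1 v)); move: hv; rewrite prednK.
have uJ : uniq J by rewrite filter_uniq // filter_uniq // enum_uniq.
case EJ: J => [|i0 J']; first by rewrite EJ in szJ; move: szJ; rewrite leqn0 => /eqP L00; move: L0; rewrite L00.
pose s : {ffun 'I_L -> 'I_M} := [ffun k : 'I_L => nth i0 J k].
have kJ : forall k : 'I_L, (k < size J)%N by move=> k; exact: leq_trans (ltn_ord k) szJ.
have injS : injective s.
  move=> a b; rewrite !ffunE => /eqP; rewrite nth_uniq ?kJ // => /eqP.
  exact: val_inj.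
have inJ : forall k, s k \in J by move=> k; rewrite ffunE mem_nth ?kJ.
have sB : sel s y = [tuple v | _ < L].
  apply: eq_from_tnth => k; rewrite !tnth_mktuple.
  by have := inJ k; rewrite mem_filter => /andP[/eqP].
have sbad : s \in badS by rewrite mem_filter in_injs // andbT sB; exact: mem_set.
have : s o \in Rm by exact: (map_f (fun s : {ffun 'I_L -> 'I_M} => s o)).
by have := inJ o; rewrite !mem_filter => /andP[_ /andP[/negP]].
Qed.
End expurgate.

Section meas.
Context (R : realType) (n L : nat).
Notation V := (n.-tuple R).
Notation Z := (L.-tuple V).

Lemma mcoord i j : measurable_fun [set: Z] (fun z : Z => tnth (tnth z i) j).
Proof.
exact: (measurableT_comp (measurable_tnth j) (measurable_tnth i)).
Qed.

Lemma mle (f : Z -> R) c : measurable_fun setT f -> measurable [set z | f z <= c].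
Proof.
move=> mf; have := mf measurableT `]-oo, c]%classic (measurable_itv _).
rewrite setTI; congr measurable; apply/seteqP; split => z /=;
  by rewrite in_itv /=.
Qed.

Lemma mlt (f : Z -> R) c : measurable_fun setT f -> measurable [set z | f z < c].
Proof.
move=> mf; have := mf measurableT `]-oo, c[%classic (measurable_itv _).
rewrite setTI; congr measurable; apply/seteqP; split => z /=;
  by rewrite in_itv /=.
Qed.

Lemma msqdist (g : Z -> V) (y : V) :
  (forall j, measurable_fun setT (fun z => tnth (g z) j)) ->
  measurable_fun setT (fun z => sqdist (g z) y).
Proof.
move=> mg; rewrite /sqdist; apply: measurable_sum => j.
apply: measurable_realfun.measurable_funX; apply: measurable_realfun.measurable_funB => //; exact: measurable_cst.
Qed.

Lemma mbigmax (g : 'I_L -> Z -> R) :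
  (forall i, measurable_fun setT (g i)) ->
  measurable_fun setT (fun z => \big[Num.max/0]_(i < L) g i z).
Proof.
move=> mg; rewrite /index_enum; elim: (Finite.enum _) => [|a s IH].
  under eq_fun do rewrite big_nil; exact: measurable_cst.
under eq_fun do rewrite big_cons; exact: measurable_realfun.measurable_maxr.
Qed.

Lemma mavg c : measurable [set z : Z | avgrad2 (fun i => tnth z i) <= c].
Proof.
apply: mle; rewrite /avgrad2.
apply: measurable_realfun.measurable_funM; first exact: measurable_cst.
apply: measurable_sum => i; rewrite /sqdist.
apply: measurable_sum => j; apply: measurable_realfun.measurable_funX; apply: measurable_realfun.measurable_funB.
  exact: mcoord.
under eq_fun do rewrite tnth_mktuple.
apply: measurable_realfun.measurable_funM; first exact: measurable_cst.
by apply: measurable_sum => k; exact: mcoord.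
Qed.
End meas.

Section radmeas.
Context (R : realType) (n L : nat).
Notation V := (n.-tuple R).
Notation Z := (L.-tuple V).

Definition Fm (x : 'I_L -> V) (y : V) := \big[Num.max/0]_(i < L) sqdist (x i) y.

Lemma sqdist_ge0 (a b : V) : 0 <= sqdist a b.
Proof. by apply: sumr_ge0 => j _; exact: sqr_ge0. Qed.

Lemma Fm_ge0 x y : 0 <= Fm x y.
Proof.
rewrite /Fm; elim/big_ind: _ => // [a b ha hb|i _]; [by rewrite le_max ha|exact: sqdist_ge0].
Qed.

Lemma Fm_le x y c : 0 <= c -> (forall i, sqdist (x i) y <= c) -> Fm x y <= c.
Proof. by move=> c0 h; apply: bigmax_le => // i _; exact: h. Qed.

Lemma sqdist_le_Fm x y i : sqdist (x i) y <= Fm x y.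
Proof. by rewrite /Fm (bigD1 i) //= le_max lexx. Qed.

Lemma rad2_le_Fm x y : rad2 x <= Fm x y.
Proof.
have hl : has_lbound [set Fm x y | y in [set: V]].
  by exists 0 => _ [y' _ <-]; exact: Fm_ge0.
by apply: (ge_inf hl); exists y.
Qed.

Lemma rad2_lt x e : rad2 x < e -> exists y, Fm x y < e.
Proof.
move=> h; have [_ [y _ <-] hy] := inf_lt (ex_intro _ (Fm x (origin R n)) (ex_intro2 _ _ (origin R n) I erefl)) h.
by exists y.
Qed.

Lemma sq_shift (a u t : R) : 0 <= u -> u <= t -> t <= 1 ->
  (a - u) ^+ 2 <= a ^+ 2 + t * (2 * `|a| + 1).
Proof.
move=> u0 ut t1.
have ha : - a <= `|a| by rewrite -normrN ler_norm.
have hA : 0 <= `|a| by [].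
have p1 : 0 <= (`|a| + a) * u by rewrite mulr_ge0 // -lerBlDr sub0r.
have p2 : 0 <= (t - u) * `|a| by rewrite mulr_ge0 // subr_ge0.
have p3 : 0 <= u * (1 - u) by rewrite mulr_ge0 // subr_ge0 (le_trans ut t1).
nra.
Qed.

Definition qr (q : n.-tuple rat) : V := [tuple ratr (tnth q j) | j < n].

Lemma approx x y (e : R) : 0 < e -> exists q, Fm x (qr q) <= Fm x y + e.
Proof.
move=> e0.
pose W i := \sum_(j < n) (2 * `|tnth (x i) j - tnth y j| + 1).
have W0 i : 0 <= W i by apply: sumr_ge0 => j _; rewrite addr_ge0 ?mulr_ge0.
pose K := 1 + \sum_(i < L) W i.
have K0 : 0 < K by rewrite ltr_wpDr ?ltr01 // sumr_ge0.
have WK i : W i <= K.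
  rewrite /K (bigD1 i) //=.
  have : 0 <= \sum_(i0 < L | i0 != i) W i0 by apply: sumr_ge0 => j _; exact: W0.
  lra.
pose t := Num.min 1 (e / K).
have t0 : 0 < t by rewrite lt_min ltr01 divr_gt0.
have t1 : t <= 1 by rewrite ge_min lexx.
have tK : t * K <= e.
  by rewrite -ler_pdivlMr // ge_min lexx orbT.
have hq : forall j : 'I_n, exists r : rat, ratr r \in `]tnth y j, tnth y j + t[.
  by move=> j; apply: rat_in_itvoo; rewrite ltrDl.
have [f hf] := choice hq.
exists (mktuple f).
apply: Fm_le; first by rewrite addr_ge0 ?Fm_ge0 ?ltW.
move=> i; apply: le_trans (_ : sqdist (x i) y + t * W i <= _); last first.
  apply: lerD; first exact: sqdist_le_Fm.
  by apply: le_trans tK; rewrite ler_pM2l.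
rewrite /sqdist /W mulr_sumr -big_split /=; apply: ler_sum => j _.
rewrite /qr !tnth_mktuple.
have := hf j; rewrite in_itv /= => /andP[h1 h2].
have -> : tnth (x i) j - ratr (f j) = (tnth (x i) j - tnth y j) - (ratr (f j) - tnth y j).
  by rewrite opprB addrA subrK.
apply: sq_shift; first by rewrite subr_ge0 ltW.
  by rewrite lerBlDl ltW.
exact: t1.
Qed.
End radmeas.

Section radmeas2.
Context (R : realType) (n L : nat).
Notation V := (n.-tuple R).
Notation Z := (L.-tuple V).

Lemma rad2_leP (x : 'I_L -> V) c :
  rad2 x <= c <-> forall k : nat, exists q, Fm x (qr R q) < c + (k.+1%:R)^-1.
Proof.
split => [h k|h].
  have e0 : 0 < (k.+1%:R : R)^-1 / 2 by rewrite divr_gt0 // invr_gt0.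
  have hlt : rad2 x < c + (k.+1%:R : R)^-1 / 2 by apply: (le_lt_trans h); rewrite ltrDl.
  have [y hy] := rad2_lt hlt.
  have [q hq] := approx x y e0.
  exists q; apply: (le_lt_trans hq).
  have -> : c + (k.+1%:R : R)^-1 = (c + (k.+1%:R : R)^-1 / 2) + (k.+1%:R : R)^-1 / 2.
    by rewrite -addrA -splitr.
  by rewrite ltrD2r.
apply/ler_addgt0Pr => e e0.
have [q hq] := h (Num.Def.trunc e^-1).
apply: (le_trans (rad2_le_Fm x (qr R q))); apply: (le_trans (ltW hq)).
rewrite lerD2l.
have hN : e^-1 < (Num.Def.trunc e^-1).+1%:R by rewrite -truncn_lt_nat ?invr_ge0 ?ltW.
by rewrite -[leRHS]invrK lef_pV2 ?posrE ?invr_gt0 ?ltW //.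
Qed.

Definition Sq (c : R) (k : nat) (m : nat) : set Z :=
  if @unpickle (n.-tuple rat) m is Some q then
    [set z | Fm (fun i => tnth z i) (qr R q) < c + (k.+1%:R)^-1]
  else set0.

Lemma mrad c : measurable [set z : Z | rad2 (fun i => tnth z i) <= c].
Proof.
rewrite (_ : [set z | _] = \bigcap_(k in [set: nat]) \bigcup_(m in [set: nat]) Sq c k m).
  apply: bigcap_measurableType => k _; apply: bigcup_measurable => m _.
  rewrite /Sq; case: (unpickle m) => // q; apply: mlt.
  apply: mbigmax => i; apply: msqdist => j; exact: mcoord.
apply/seteqP; split => z.
  move=> /= /rad2_leP h k _; have [q hq] := h k.
  by exists (pickle q) => //; rewrite /Sq pickleK.
move=> h; apply/rad2_leP => k; have [m _] := h k I.
by rewrite /Sq; case: (unpickle m) => // q hq; exists q.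
Qed.
End radmeas2.

Section codes.
Context (R : realType) (n L : nat) (L2 : (2 <= L)%N) (P : R).
Notation V := (n.-tuple R).
Notation Z := (L.-tuple V).
Variable D : probability V R.
Hypothesis hD : D (eball (origin R n) (Num.sqrt (n%:R * P))) = 1%E.

Lemma meball (y : V) r : measurable (eball y r).
Proof.
have mf : measurable_fun [set: V] (fun x : V => sqdist x y).
  rewrite /sqdist; apply: measurable_sum => j.
  apply: measurable_realfun.measurable_funX; by apply: measurable_realfun.measurable_funB => //; exact: measurable_tnth.
have := mf measurableT `]-oo, r ^+ 2]%classic (measurable_itv _).
rewrite setTI; congr measurable; apply/seteqP; split => z /=;
  by rewrite in_itv /=.
Qed.

Lemma size_injs M : (size (injs M L) <= M ^ L)%N.
Proof.
rewrite /injs size_filter; apply: leq_trans (count_size _ _) _.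
by rewrite -cardE card_ffun !card_ord.
Qed.

Lemma code_exists (Bad : set Z) (mBad : measurable Bad)
  (bad_const : forall v : V, Bad [tuple v | _ < L]) (p : R)
  (hp : tpow D L Bad = p%:E) (M : nat) :
  exists C : seq V, [/\ in_power_ball P C,
    (forall x : 'I_L -> V, injective x -> (forall i, x i \in C) -> ~ Bad [tuple x i | i < L]) &
    M%:R - (M ^ L)%:R * p <= (L.-1 * size C)%:R].
Proof.
have L0 : (0 < L)%N by apply: leq_trans L2.
have p0 : 0 <= p by rewrite -lee_fin -hp measure_ge0.
have [y [Gy hy]] := @exists_good _ _ _ D M L Bad mBad _ (meball _ _) hD p hp.
exists (xcode L0 Bad y); split.
- split; first exact: code_uniq.
  by move=> v /code_mem [i _ ->]; exact: Gy.
- by move=> x ix xC; apply: code_good.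
have h1 := size_Ix L0 Bad y.
have h2 := code_size L0 y bad_const.
have h3 : (cnt Bad y)%:R <= (M ^ L)%:R * p.
  apply: le_trans hy _; apply: ler_wpM2r => //; rewrite ler_nat; exact: size_injs.
have h4 : (M <= L.-1 * size (xcode L0 Bad y) + cnt Bad y)%N.
  by apply: leq_trans h1 _; rewrite leq_add2r.
have h5 : M%:R <= (L.-1 * size (xcode L0 Bad y))%:R + (cnt Bad y)%:R :> R.
  by rewrite -natrD ler_nat.
lra.
Qed.
End codes.

Section apps.
Context (R : realType) (n L : nat) (L2 : (2 <= L)%N) (P N : R) (hN : 0 < N).
Notation V := (n.-tuple R).
Notation Z := (L.-tuple V).
Variable D : probability V R.
Hypothesis hD : D (eball (origin R n) (Num.sqrt (n%:R * P))) = 1%E.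
Context (d : measure_display) (Omega : measurableType d) (Pr : probability Omega R)
  (X : 'I_L -> Omega -> V) (hX : iid_with_law Pr D X).

Lemma cN0 : 0 <= n%:R * N. Proof. by rewrite mulr_ge0 // ltW. Qed.

Lemma tnth_fun (x : 'I_L -> V) : (fun i => tnth [tuple x k | k < L] i) = x.
Proof. by apply/funext => i; rewrite tnth_mktuple. Qed.

Lemma law_event (phi : ('I_L -> V) -> R) (mB : measurable [set z : Z | phi (fun i => tnth z i) <= (n%:R * N)]) :
  tpow D L [set z : Z | phi (fun i => tnth z i) <= (n%:R * N)] =
  (fine (Pr [set w | phi (fun i => X i w) <= (n%:R * N)]))%:E.
Proof.
case: hX => mX [hD' hI].
have E : Pr [set w | phi (fun i => X i w) <= (n%:R * N)] = tpow D L [set z : Z | phi (fun i => tnth z i) <= (n%:R * N)].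
  rewrite -(iid_law mX hD' hI mB); congr (Pr _).
  by apply/seteqP; split => w /=; rewrite (tnth_fun (fun i => X i w)).
by rewrite E fineK //; exact: fin_num_measure.
Qed.

Lemma sqdist0 (v : V) : sqdist v v = 0.
Proof. by rewrite /sqdist big1 // => j _; rewrite subrr expr0n. Qed.

Lemma rad_code M : exists C : seq V, list_decodable P N L C /\
  M%:R - (M ^ L)%:R * fine (Pr [set w | rad2 (fun i => X i w) <= n%:R * N]) <= (L.-1 * size C)%:R.
Proof.
have mB := @mrad R n L (n%:R * N).
have bc : forall v : V, [set z : Z | rad2 (fun i => tnth z i) <= n%:R * N] [tuple v | _ < L].
  move=> v /=; rewrite (tnth_fun (fun _ => v)).
  apply: le_trans (rad2_le_Fm _ v) _; apply: Fm_le; first exact: cN0.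
  by move=> _; rewrite sqdist0 cN0.
have [C [hC hgood hsize]] := code_exists L2 hD mB bc (law_event (phi := @rad2 R n L) mB) M.
exists C; split => //; split => // y0.
rewrite leqNgt; apply/negP => hc.
set C' := seq.filter (fun x => x \in eball y0 (Num.sqrt (n%:R * N))) C.
have szC : (L <= size C')%N.
  rewrite size_filter; move: hc; rewrite subn1 prednK //; exact: leq_trans L2.
have uC : uniq C' by rewrite filter_uniq //; case: hC.
pose x k := nth (origin R n) C' (nat_of_ord (k : 'I_L)).
have kC : forall k : 'I_L, (k < size C')%N by move=> k; exact: leq_trans (ltn_ord k) szC.
have injx : injective x.
  by move=> a b /eqP; rewrite /x nth_uniq ?kC // => /eqP; exact: val_inj.
have xC' : forall k, x k \in C' by move=> k; rewrite /x mem_nth ?kC.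
apply: (hgood x injx); first by move=> k; have := xC' k; rewrite mem_filter => /andP[].
rewrite /= tnth_fun; apply: le_trans (rad2_le_Fm _ y0) _; apply: Fm_le; first exact: cN0.
move=> k; have := xC' k; rewrite mem_filter => /andP[+ _].
by rewrite inE /eball /= sqr_sqrtr // cN0.
Qed.

Lemma avg_const (v : V) : avgrad2 (fun _ : 'I_L => v) = 0.
Proof.
have L0 : L%:R != 0 :> R by rewrite pnatr_eq0 -lt0n (leq_trans _ L2).
rewrite /avgrad2.
have -> : centroid (fun _ : 'I_L => v) = v.
  apply: eq_from_tnth => j; rewrite tnth_mktuple sumr_const card_ord.
  by rewrite -[tnth v j *+ L]mulr_natl mulrA mulVf // mul1r.
by rewrite big1 ?mulr0 // => i _; exact: sqdist0.
Qed.

Lemma avg_code M : exists C : seq V, avg_list_decodable P N L C /\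
  M%:R - (M ^ L)%:R * fine (Pr [set w | avgrad2 (fun i => X i w) <= n%:R * N]) <= (L.-1 * size C)%:R.
Proof.
have mB := @mavg R n L (n%:R * N).
have bc : forall v : V, [set z : Z | avgrad2 (fun i => tnth z i) <= n%:R * N] [tuple v | _ < L].
  by move=> v /=; rewrite (tnth_fun (fun _ => v)) avg_const cN0.
have [C [hC hgood hsize]] := code_exists L2 hD mB bc (law_event (phi := @avgrad2 R n L) mB) M.
exists C; split => //; split => // x injx xC.
rewrite ltNge; apply/negP => h; apply: (hgood x injx xC).
by rewrite /= tnth_fun.
Qed.

End apps.

Lemma limsup_ge (R : realType) (u : nat -> \bar R) x K :
  (forall k, (K <= k)%N -> (x <= u k)%E) -> (x <= limn_esup u)%E.
Proof.
move=> h; rewrite limn_esup_lim; apply: lime_ge; first exact: is_cvg_esups.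
apply: nearW => m /=.
apply: le_trans (h (maxn m K) (leq_maxr _ _)) _.
by apply: ereal_sup_ubound; exists (maxn m K) => //=; exact: leq_maxl.
Qed.

Section asym.
Context (R : realType) (L : nat) (L2 : (2 <= L)%N).
Variable good : forall n : nat, seq (n.-tuple R) -> Prop.
Hypothesis hsing : forall n, exists C, @good n C /\ size C = 1%N.
Variable p : nat -> R.
Hypothesis p0 : forall n, 0 <= p n.
Hypothesis hcode : forall n M, exists C, @good n C /\
  M%:R - (M ^ L)%:R * p n <= (L.-1 * size C)%:R.

Definition uu (n : nat) : \bar R := ereal_sup [set @rate R n C | C in [set C : seq (n.-tuple R) | @good n C]].

Lemma u_ge n C : @good n C -> (rate C <= uu n)%E.
Proof. by move=> gC; apply: ereal_sup_ubound; exists C. Qed.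

Lemma cap_ge0 : (0 <= limn_esup uu)%E.
Proof.
apply: (@limsup_ge _ _ _ 0%N) => k _.
have [C [gC sC]] := hsing k.
by apply: le_trans (u_ge gC); rewrite /rate sC /= ln1 mulr0.
Qed.

Lemma rate_ge n (C : seq (n.-tuple R)) r : (0 < n)%N ->
  expR (n%:R * r) <= (size C)%:R -> (r%:E <= rate C)%E.
Proof.
move=> n0 h.
have s0 : 0 < (size C)%:R :> R by apply: lt_le_trans h; exact: expR_gt0.
rewrite /rate; case: eqP => [e|_]; first by move: s0; rewrite e ltxx.
rewrite lee_fin ler_pdivlMl ?ltr0n //.
by rewrite -[X in X <= _]expRK ler_ln ?posrE ?expR_gt0.
Qed.

Let Lr := (L.-1)%:R : R.
Let Lr1 : 1 <= Lr.
Proof. by rewrite /Lr ler1n -ltnS prednK // (leq_trans _ L2). Qed.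
Let hL : L%:R = Lr + 1.
Proof. by rewrite /Lr natr1 prednK // (leq_trans _ L2). Qed.

Lemma key n r r1 : (0 < n)%N -> 0 < r -> r < r1 ->
  (p n = 0 \/ p n < expR (- (n%:R * (Lr * r1)))) ->
  (2 * L%:R) ^+ L.-1 * expR (- (n%:R * (Lr * (r1 - r)))) <= 1 / 2 ->
  (r%:E <= uu n)%E.
Proof.
move=> n0 r0 rr1 hp hQ.
set u := expR (n%:R * r).
have u1 : 1 <= u by rewrite /u -expR0 ler_expR mulr_ge0 // ltW.
set M := (Num.Def.trunc (2 * Lr * u)).+1.
have hM1 : 2 * Lr * u < M%:R by rewrite /M -truncn_lt_nat ?mulr_ge0 // ?(le_trans _ u1) ?(le_trans _ Lr1).
have hM2 : M%:R <= 2 * Lr * u + 1.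
  rewrite /M -natr1 lerD2r truncn_le mulr_ge0 // ?(le_trans _ u1) ?(le_trans _ Lr1) //.
  by rewrite mulr_ge0 // (le_trans _ Lr1).
have hM3 : M%:R <= 2 * L%:R * u by rewrite hL; lra.
have M0 : 0 <= M%:R :> R by [].
have L0 : (0 < L)%N by exact: leq_trans L2.
have u0 : 0 <= u by exact: le_trans u1.
have hA : M%:R ^+ L.-1 <= (2 * L%:R) ^+ L.-1 * expR (Lr * (n%:R * r)).
  rewrite /Lr expRM_natl -exprMn; apply: lerXn2r; rewrite ?nnegrE //.
have hB : M%:R ^+ L.-1 * p n <= 1 / 2.
  case: hp => [->|hp]; first by rewrite mulr0.
  apply: le_trans (_ : (2 * L%:R) ^+ L.-1 * expR (Lr * (n%:R * r)) * expR (- (n%:R * (Lr * r1))) <= _).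
    by apply: ler_pM => //; exact: ltW.
  rewrite -mulrA -expRD; apply: le_trans hQ.
  by rewrite (_ : _ + _ = -(n%:R * (Lr * (r1 - r)))) //; ring.
have hpow : (M ^ L)%:R * p n <= M%:R / 2.
  rewrite natrX -{1}(prednK L0) exprS -mulrA.
  by apply: le_trans (ler_wpM2l M0 hB) _; rewrite mul1r.
have [C [gC hC]] := hcode n M.
apply: le_trans (u_ge gC); apply: rate_ge => //.
rewrite -/u.
have : 2 * Lr * u <= 2 * Lr * (size C)%:R.
  apply: le_trans (ltW hM1) _.
  have h2 : M%:R / 2 <= (L.-1 * size C)%:R :> R.
    have e : M%:R / 2 = M%:R - M%:R / 2 :> R by rewrite {2}[M%:R]splitr addrK.
    by rewrite e; apply: le_trans hC; rewrite lerB.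
  rewrite natrM -/Lr in h2.
  have e2 : M%:R = 2 * (M%:R / 2) :> R by rewrite mulrC mulfVK.
  by rewrite e2 -mulrA ler_pM2l.
by rewrite ler_pM2l // mulr_gt0 // (lt_le_trans _ Lr1).
Qed.
Lemma cap_main (E : R) :
  (exists l, (fun n => expo n (p n)%:E) @ \oo --> l /\ (E%:E <= l)%E) ->
  ((E / (L%:R - 1))%:E <= limn_esup uu)%E.
Proof.
move=> [l [hl El]].
have hL1 : L%:R - 1 = Lr by rewrite hL addrK.
have Lr0 : 0 < Lr by exact: lt_le_trans Lr1.
rewrite hL1.
have [E0|E0] := leP E 0.
  apply: le_trans cap_ge0; rewrite lee_fin.
  by apply: mulr_le0_ge0 => //; rewrite invr_ge0 ltW.
set a := E / Lr.
have a0 : 0 < a by rewrite divr_gt0.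
have hE : E = Lr * a by rewrite /a mulrC divfK // gt_eqF.
suff H : forall r, 0 < r -> r < a -> (r%:E <= limn_esup uu)%E.
  move: (limn_esup uu) H => x H.
  case: x H => [x| |] H; last 2 first.
  - exact: leey.
  - have := H (a / 2); rewrite leeNy_eq => /(_ _ _)/eqP; rewrite divr_gt0 //.
    by move=> /(_ isT); rewrite ltr_pdivrMr // ltr_pMr // ltr1n => /(_ isT).
  rewrite lee_fin leNgt; apply/negP => xa.
  set m := Num.max x 0.
  have hm1 : x <= m by rewrite le_max lexx.
  have hm2 : 0 <= m by rewrite le_max lexx orbT.
  have hm3 : m < a by rewrite gt_max xa a0.
  have hm' := splitr m; have ha' := splitr a.
  have hr := H ((m + a) / 2); rewrite mulrDl in hr.
  have : ((m / 2 + a / 2)%:E <= x%:E)%E by apply: hr; lra.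
  rewrite lee_fin; lra.
move=> r r0 ra.
set r1 := (r + a) / 2.
have rr1 : r < r1 by rewrite /r1 mulrDl; lra.
have r1a : r1 < a by rewrite /r1 mulrDl; lra.
set E' := Lr * r1.
have E'l : (E'%:E < l)%E by apply: lt_le_trans El; rewrite lte_fin hE ltr_pM2l.
have [K1 _ hK1] := hl _ (open_ereal_gt' E'l).
set d := Lr * (r1 - r).
have d0 : 0 < d by rewrite mulr_gt0 // subr_gt0.
set A := (2 * L%:R) ^+ L.-1 : R.
have A0 : 0 < A by rewrite exprn_gt0 // mulr_gt0 // ltr0n (leq_trans _ L2).
set Q := ln (2 * A).
set K2 := (Num.Def.trunc (`|Q| / d)).+1.
apply: (@limsup_ge _ _ _ (maxn (maxn K1 K2) 1)) => n hn.
have n0 : (0 < n)%N by apply: leq_trans hn; exact: leq_maxr.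
have nK1 : (K1 <= n)%N by apply: leq_trans hn; rewrite leq_max leq_max leqnn.
have nK2 : (K2 <= n)%N by apply: leq_trans hn; rewrite leq_max leq_max leqnn orbT.
have nR : 0 < n%:R :> R by rewrite ltr0n.
apply: (key n0 r0 rr1).
  have h := hK1 n nK1; rewrite /expo /= in h.
  have [pz|pn0] := eqVneq (p n) 0; first by left.
  rewrite (negbTE pn0) lte_fin in h; right.
  have pp : 0 < p n by rewrite lt_neqAle eq_sym pn0 p0.
  rewrite -(lnK pp) ltr_expR.
  have : n%:R * E' < n%:R * (- (n%:R^-1 * ln (p n))) by rewrite ltr_pM2l.
  by rewrite mulrN mulVKf ?gt_eqF // ltrNr.
have hnd : `|Q| < n%:R * d.
  have : `|Q| / d < n%:R.
    apply: lt_le_trans (_ : K2%:R <= n%:R); last by rewrite ler_nat.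
    by rewrite /K2 -truncn_lt_nat // divr_ge0 // ltW.
  by rewrite ltr_pdivrMr // mulrC.
have hQ : expR (- (n%:R * d)) <= expR (- Q).
  by rewrite ler_expR lerN2; apply: le_trans (ltW hnd); exact: ler_norm.
rewrite -/d; apply: le_trans (_ : A * expR (- Q) <= _).
  by rewrite ler_pM2l.
by rewrite expRN /Q lnK ?posrE ?mulr_gt0 // invfM mulrCA divff ?gt_eqF // mulr1 div1r lexx.
Qed.

End asym.

Unset Implicit Arguments.

Theorem mainTheorem4 (R : realType) (P N : R) (L : nat)
  (hP : 0 < P) (hN : 0 < N) (hL : (2 <= L)%N)
  (D : forall n : nat, probability (n.-tuple R) R)
  (hD : forall n : nat, D n (eball (origin R n) (Num.sqrt (n%:R * P))) = 1%E)
  (d : nat -> measure_display) (Omega : forall n : nat, measurableType (d n))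
  (Pr : forall n : nat, probability (Omega n) R)
  (X : forall n : nat, 'I_L -> Omega n -> n.-tuple R)
  (hX : forall n : nat, iid_with_law (Pr n) (D n) (X n))
  (E Ebar : R) :
  ((exists l : \bar R,
      (fun n => expo n (Pr n [set w | rad2 (fun i => X n i w) <= n%:R * N]))
        @ \oo --> l /\ (E%:E <= l)%E) ->
     ((E / (L%:R - 1))%:E <= Cap P N L)%E) /\
  ((exists l : \bar R,
      (fun n => expo n (Pr n [set w | avgrad2 (fun i => X n i w) <= n%:R * N]))
        @ \oo --> l /\ (Ebar%:E <= l)%E) ->
     ((Ebar / (L%:R - 1))%:E <= Cap_avg P N L)%E).
Proof.
have orig_ball : forall n, eball (origin R n) (Num.sqrt (n%:R * P)) (origin R n).
  by move=> n; rewrite /eball /= sqdist0 sqr_ge0.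
split.
- move=> H.
  apply: (@cap_main R L hL (fun n C => @list_decodable R n P N L C) _
     (fun n => fine (Pr n [set w | rad2 (fun i => X n i w) <= n%:R * N])) _ _ E H).
  + move=> n; exists [:: origin R n]; split => //; split.
      by split => // x; rewrite inE => /eqP ->.
    move=> y /=; rewrite addn0; case: (_ \in _) => //=.
    by rewrite subn_gt0.
  + by move=> n; apply: fine_ge0; exact: measure_ge0.
  + by move=> n M; exact: (rad_code hL hN (hD n) (hX n) M).
- move=> H.
  apply: (@cap_main R L hL (fun n C => @avg_list_decodable R n P N L C) _
     (fun n => fine (Pr n [set w | avgrad2 (fun i => X n i w) <= n%:R * N])) _ _ Ebar H).
  + move=> n; exists [:: origin R n]; split => //; split.
      by split => // x; rewrite inE => /eqP ->.
    move=> x injx xC.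
    have L0 : (0 < L)%N by exact: leq_trans hL.
    have h0 := xC (Ordinal L0); have h1 := xC (Ordinal hL).
    rewrite !inE in h0 h1.
    by have := injx _ _ (etrans (eqP h0) (esym (eqP h1))).
  + by move=> n; apply: fine_ge0; exact: measure_ge0.
  + by move=> n M; exact: (avg_code hL hN (hD n) (hX n) M).
Qed.
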